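(* Let $\nu\ge0$, $\Psi_\nu(x)=I_{\nu+1}(x)/I_\nu(x)$ and $$\xi_\nu(x)=\frac{\log\left(1-\frac{2(\nu+1)}{x}\Psi_\nu(x)\right)}{\log\Psi_\nu(x)}.$$ Then $$\lim_{x\to\infty}\xi_\nu(x)=\frac{4(\nu+1)}{2\nu+1}.$$
   Context: $I_\nu$ denotes the modified Bessel function of the first kind of order $\nu$. *)

(* Defs.v *)
From Stdlib Require Import Reals.
From Coquelicot Require Import Coquelicot.
Open Scope R_scope.

Definition Gamma (s : R) : R :=
  RInt_gen (fun t => Rpower t (s - 1) * exp (- t)) (at_right 0) (Rbar_locally p_infty).

Definition besselI (nu x : R) : R :=
  Series (fun k : nat =>
    Rpower (x / 2) (2 * INR k + nu) / (INR (Factorial.fact k) * Gamma (INR k + nu + 1))).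

Definition Psi (nu x : R) : R := besselI (nu + 1) x / besselI nu x.

Definition xi (nu x : R) : R :=
  ln (1 - 2 * (nu + 1) / x * Psi nu x) / ln (Psi nu x).

(* Main.v *)
Require Import Defs.
From Stdlib Require Import Reals Lra Psatz Classical.
From Coquelicot Require Import Coquelicot.
Open Scope R_scope.


Lemma mono_lim (g : R -> R) (c M : R) :
  (forall x y, c <= x -> x <= y -> g x <= g y) ->
  (forall x, c <= x -> g x <= M) ->
  exists l, (forall x, c <= x -> g x <= l) /\
    filterlim g (Rbar_locally p_infty) (locally l).
Proof.
  intros Hm HM.
  set (E := fun y => exists x, c <= x /\ y = g x).
  assert (HB : bound E).
  { exists M. intros y [x [Hx ->]]. now apply HM. }
  assert (HE : exists y, E y) by (exists (g c); exists c; split; [lra|easy]).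
  destruct (completeness E HB HE) as [l [Hub Hlub]].
  exists l. split.
  - intros x Hx. apply Hub. exists x; split; easy.
  - apply filterlim_locally. intros eps.
    assert (Hex : exists x0, c <= x0 /\ l - eps < g x0).
    { apply NNPP. intros Hn.
      assert (l <= l - eps).
      { apply Hlub. intros y [x [Hx ->]].
        destruct (Rle_lt_dec (g x) (l - eps)) as [h|h]; [easy|].
        exfalso; apply Hn; exists x; split; easy. }
      destruct eps; simpl in *; lra. }
    destruct Hex as [x0 [Hx0 Hgx0]].
    exists x0. intros x Hx.
    assert (g x0 <= g x) by (apply Hm; lra).
    assert (g x <= l) by (apply Hub; exists x; split; [lra|easy]).
    change (Rabs (g x - l) < eps).
    apply Rabs_def1; lra.
Qed.

Lemma gen_right (f : R -> R) (b l : R) (G : (R -> Prop) -> Prop) {FG : Filter G} :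
  G (fun c => ex_RInt f b c) ->
  filterlim (fun c => RInt f b c) G (locally l) ->
  is_RInt_gen f (at_point b) G l.
Proof.
  intros HE HL P HP.
  apply Filter_prod with (Q := fun a => a = b)
    (R := fun c => ex_RInt f b c /\ P (RInt f b c)).
  - reflexivity.
  - apply filter_and; [exact HE | exact (HL P HP)].
  - intros x y -> [H1 H2]. eexists; split; [exact (RInt_correct _ _ _ H1) | exact H2].
Qed.

Lemma gen_left (f : R -> R) (b l : R) (G : (R -> Prop) -> Prop) {FG : Filter G} :
  G (fun a => ex_RInt f a b) ->
  filterlim (fun a => RInt f a b) G (locally l) ->
  is_RInt_gen f G (at_point b) l.
Proof.
  intros HE HL P HP.
  apply Filter_prod with (R := fun a => a = b)
    (Q := fun c => ex_RInt f c b /\ P (RInt f c b)).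
  - apply filter_and; [exact HE | exact (HL P HP)].
  - reflexivity.
  - intros x y [H1 H2] ->. eexists; split; [exact (RInt_correct _ _ _ H1) | exact H2].
Qed.

Lemma sum_ge_last (a : nat -> R) (n : nat) :
  (forall k, 0 <= a k) -> a n <= sum_f_R0 a n.
Proof.
  intros H. destruct n. simpl; lra.
  rewrite tech5. pose proof (cond_pos_sum a n H). lra.
Qed.

Lemma exp_ge_pow (t : R) (n : nat) : 0 <= t -> t ^ n <= INR (Factorial.fact n) * exp t.
Proof.
  intros Ht.
  pose proof (exp_ge_taylor t n Ht) as H.
  pose proof (sum_ge_last (fun k => t ^ k / INR (Factorial.fact k)) n) as H2.
  assert (Hf : 0 < INR (Factorial.fact n)) by (apply lt_0_INR, Factorial.lt_O_fact).
  assert (t ^ n / INR (Factorial.fact n) <= exp t).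
  { eapply Rle_trans; [apply H2|exact H].
    intros k. apply Rdiv_le_0_compat. apply pow_le; lra. apply lt_0_INR, Factorial.lt_O_fact. }
  apply Rmult_le_reg_r with (/ INR (Factorial.fact n)). apply Rinv_0_lt_compat; lra.
  replace (INR (Factorial.fact n) * exp t * / INR (Factorial.fact n)) with (exp t) by (field; lra).
  exact H0.
Qed.


Lemma exp_le' x y : x <= y -> exp x <= exp y.
Proof. intros [H|H]. left; now apply exp_increasing. rewrite H; lra. Qed.

Lemma ln_le' x y : 0 < x -> x <= y -> ln x <= ln y.
Proof. intros Hx [H|H]. left; now apply ln_increasing. rewrite H; lra. Qed.

Definition fG (s t : R) : R := Rpower t (s - 1) * exp (- t).

Lemma Rpower_cont (y x : R) : 0 < x -> continuous (fun t => Rpower t y) x.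
Proof.
  intros Hx. apply (ex_derive_continuous (K:=R_AbsRing) (V:=R_NormedModule)). exists (y * Rpower x (y - 1)).
  apply is_derive_Reals. now apply derivable_pt_lim_power.
Qed.

Lemma fG_cont s x : 0 < x -> continuous (fG s) x.
Proof.
  intros Hx. unfold fG. apply (continuous_mult (fun t => Rpower t (s-1)) (fun t => exp (-t))).
  now apply Rpower_cont.
  apply (ex_derive_continuous (K:=R_AbsRing) (V:=R_NormedModule)). auto_derive; easy.
Qed.

Lemma fG_exRInt s a b : 0 < a -> 0 < b -> ex_RInt (fG s) a b.
Proof.
  intros Ha Hb. apply (ex_RInt_continuous (V:=R_CompleteNormedModule)). intros z Hz. apply fG_cont.
  assert (0 < Rmin a b) by (apply Rmin_glb_lt; lra). lra.
Qed.

Lemma fG_pos s t : 0 < t -> 0 < fG s t.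
Proof. intros. unfold fG, Rpower. apply Rmult_lt_0_compat; apply exp_pos. Qed.

Lemma fG_le1 s t : 1 <= s -> 0 < t -> t <= 1 -> fG s t <= 1.
Proof.
  intros Hs Ht Ht1. unfold fG, Rpower.
  assert (ln t <= 0) by (rewrite <- ln_1; apply ln_le'; lra).
  assert (exp ((s-1) * ln t) <= 1).
  { apply Rle_trans with (exp 0); [apply exp_le'; nra | rewrite exp_0; lra]. }
  assert (exp (-t) <= 1).
  { apply Rle_trans with (exp 0); [apply exp_le'; lra | rewrite exp_0; lra]. }
  assert (0 < exp ((s-1) * ln t)) by apply exp_pos.
  assert (0 < exp (-t)) by apply exp_pos.
  nra.
Qed.

Lemma nat_above (s : R) : exists n : nat, s <= INR n.
Proof.
  destruct (INR_archimed 1 s) as [n Hn]; [lra|]. exists n. lra.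
Qed.

Lemma Rpower_exp_bound (p t : R) (n : nat) :
  1 <= t -> p <= INR n -> Rpower t p * exp (- t) <= INR (Factorial.fact n).
Proof.
  intros Ht Hp.
  assert (H1 : Rpower t p <= t ^ n).
  { rewrite <- Rpower_pow by lra. apply Rle_Rpower; lra. }
  pose proof (exp_ge_pow t n ltac:(lra)) as H2.
  rewrite exp_Ropp.
  assert (0 < exp t) by apply exp_pos.
  assert (0 <= Rpower t p) by (unfold Rpower; left; apply exp_pos).
  apply Rmult_le_reg_r with (exp t); [lra|].
  replace (Rpower t p * / exp t * exp t) with (Rpower t p) by (field; lra). nra.
Qed.

Lemma Rpower_2 t : 0 < t -> Rpower t 2 = t ^ 2.
Proof. intros. replace 2 with (INR 2) by (simpl; lra). now apply Rpower_pow. Qed.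

Lemma fG_bound_inf s t (n : nat) : 1 <= t -> s + 1 <= INR n ->
  fG s t <= INR (Factorial.fact n) / t ^ 2.
Proof.
  intros Ht Hn.
  pose proof (Rpower_exp_bound (s+1) t n Ht Hn) as H.
  replace (s + 1) with ((s - 1) + 2) in H by ring.
  rewrite Rpower_plus, Rpower_2 in H by lra.
  unfold fG.
  assert (0 < t ^ 2) by (apply pow_lt; lra).
  apply Rmult_le_reg_r with (t ^ 2); [lra|].
  replace (INR (Factorial.fact n) / t ^ 2 * t ^ 2) with (INR (Factorial.fact n)) by (field; lra). nra.
Qed.


Lemma RInt_inv2 (C x : R) : 1 <= x -> RInt (fun t => C / t ^ 2) 1 x = C - C / x.
Proof.
  intros Hx. apply is_RInt_unique.
  replace (C - C / x) with (minus ((fun t => - C / t) x) ((fun t => - C / t) 1)).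
  2:{ unfold minus, plus, opp; simpl. field. lra. }
  apply (is_RInt_derive (V:=R_CompleteNormedModule)).
  - intros t Ht. rewrite Rmin_left, Rmax_right in Ht by lra.
    auto_derive. intro; lra. field. lra.
  - intros t Ht. rewrite Rmin_left, Rmax_right in Ht by lra.
    apply (ex_derive_continuous (K:=R_AbsRing) (V:=R_NormedModule)).
    auto_derive. intro; nra.
Qed.

Lemma gamma_right s : 1 <= s ->
  exists l, 0 <= l /\ is_RInt_gen (fG s) (at_point 1) (Rbar_locally p_infty) l.
Proof.
  intros Hs.
  destruct (nat_above (s + 1)) as [n Hn].
  set (C := INR (Factorial.fact n)).
  assert (HC : 0 < C) by (apply lt_0_INR, Factorial.lt_O_fact).
  destruct (mono_lim (fun b => RInt (fG s) 1 b) 1 C) as [l [Hl Hlim]].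
  - intros x y Hx Hxy.
    rewrite <- (RInt_Chasles (V:=R_CompleteNormedModule) (fG s) 1 x y)
      by (apply fG_exRInt; lra).
    assert (0 <= RInt (fG s) x y).
    { apply RInt_ge_0; [lra| apply fG_exRInt; lra|].
      intros t Ht. left; apply fG_pos; lra. }
    unfold plus; simpl. lra.
  - intros x Hx.
    apply Rle_trans with (RInt (fun t => C / t ^ 2) 1 x).
    + apply RInt_le; [lra | apply fG_exRInt; lra | |].
      * apply (ex_RInt_continuous (V:=R_CompleteNormedModule)).
        intros z Hz. rewrite Rmin_left, Rmax_right in Hz by lra.
        apply (ex_derive_continuous (K:=R_AbsRing) (V:=R_NormedModule)).
        auto_derive. assert (0 < z ^ 2) by (apply pow_lt; lra). lra.
      * intros t Ht. apply fG_bound_inf; lra.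
    + rewrite RInt_inv2 by lra.
      assert (0 < C / x) by (apply Rdiv_lt_0_compat; lra). lra.
  - exists l. split.
    + specialize (Hl 1 ltac:(lra)). simpl in Hl.
      rewrite RInt_point in Hl. exact Hl.
    + refine (gen_right _ _ _ _ _ Hlim).
      exists 0. intros c Hc. apply fG_exRInt; lra.
Qed.

Lemma gamma_left s : 1 <= s ->
  exists l, 0 < l /\ is_RInt_gen (fG s) (at_right 0) (at_point 1) l.
Proof.
  intros Hs.
  destruct (mono_lim (fun y => RInt (fG s) (/ y) 1) 1 1) as [l [Hl Hlim]].
  - intros x y Hx Hxy.
    assert (0 < / y) by (apply Rinv_0_lt_compat; lra).
    assert (0 < / x) by (apply Rinv_0_lt_compat; lra).
    assert (/ y <= / x) by (apply Rinv_le_contravar; lra).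
    rewrite <- (RInt_Chasles (V:=R_CompleteNormedModule) (fG s) (/ y) (/ x) 1)
      by (apply fG_exRInt; lra).
    assert (0 <= RInt (fG s) (/ y) (/ x)).
    { apply RInt_ge_0; [lra| apply fG_exRInt; lra|].
      intros t Ht. left; apply fG_pos; lra. }
    unfold plus; simpl. lra.
  - intros x Hx.
    assert (0 < / x) by (apply Rinv_0_lt_compat; lra).
    assert (/ x <= 1) by (rewrite <- Rinv_1; apply Rinv_le_contravar; lra).
    apply Rle_trans with (RInt (fun _ => 1) (/ x) 1).
    + apply RInt_le; [lra | apply fG_exRInt; lra | apply ex_RInt_const |].
      intros t Ht. apply fG_le1; lra.
    + rewrite RInt_const. unfold scal; simpl; unfold mult; simpl. lra.
  - exists l. split.
    + specialize (Hl 2 ltac:(lra)). simpl in Hl.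
      eapply Rlt_le_trans; [|exact Hl].
      apply RInt_gt_0. lra. intros x Hx. apply fG_pos. lra.
      intros x Hx. apply fG_cont. lra.
    + refine (gen_left _ _ _ _ _ _).
      * exists (mkposreal 1 Rlt_0_1). intros y _ Hy. apply fG_exRInt; lra.
      * eapply filterlim_ext_loc.
        2: exact (filterlim_comp _ _ _ RinvImpl.Rinv (fun y => RInt (fG s) (/ y) 1) _ _ _ filterlim_Rinv_0_right Hlim).
        exists (mkposreal 1 Rlt_0_1). intros y _ Hy. simpl.
        rewrite Rinv_inv. reflexivity.
Qed.

Lemma gamma_is s : 1 <= s ->
  exists l, 0 < l /\ is_RInt_gen (fG s) (at_right 0) (Rbar_locally p_infty) l.
Proof.
  intros Hs.
  destruct (gamma_left s Hs) as [l1 [H1 G1]].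
  destruct (gamma_right s Hs) as [l2 [H2 G2]].
  exists (plus l1 l2). split.
  - unfold plus; simpl. lra.
  - exact (is_RInt_gen_Chasles (V:=R_NormedModule) _ 1 _ _ G1 G2).
Qed.


Lemma ball_R (x e y : R) : @ball R_UniformSpace x e y <-> Rabs (Rminus y x) < e.
Proof. unfold ball; simpl; unfold AbsRing_ball, abs, minus, plus, opp; simpl. tauto. Qed.

Lemma Rpower_derive y x : 0 < x -> is_derive (fun t => Rpower t y) x (y * Rpower x (y - 1)).
Proof. intros. apply is_derive_Reals. now apply derivable_pt_lim_power. Qed.

Definition gG (s t : R) := - (Rpower t s * exp (- t)).

Lemma gG_derive s x : 0 < x -> is_derive (gG s) x (fG (s+1) x - s * fG s x).
Proof.
  intros Hx. unfold gG, fG. replace (s + 1 - 1) with s by ring.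
  evar (d : R).
  assert (H : is_derive (fun t => Rpower t s * exp (- t)) x d).
  { apply (is_derive_mult (fun t => Rpower t s) (fun t => exp (- t))).
    apply Rpower_derive; lra. auto_derive; easy. intros; apply Rmult_comm. }
  subst d. apply (is_derive_opp (fun t => Rpower t s * exp (- t))) in H.
  match type of H with is_derive _ _ ?v =>
    replace (Rpower x s * exp (- x) - s * (Rpower x (s - 1) * exp (- x))) with v
      by (unfold opp, plus, mult; simpl; ring) end.
  exact H.
Qed.


Lemma gG_Derive s x : 0 < x -> Derive (gG s) x = fG (s+1) x - s * fG s x.
Proof. intros. apply is_derive_unique. now apply gG_derive. Qed.

Lemma gG_Derive_cont s x : 0 < x -> continuous (Derive (gG s)) x.
Proof.
  intros Hx.
  apply continuous_ext_loc with (fun y => fG (s+1) y - s * fG s y).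
  - assert (Hp : 0 < x / 2) by lra.
    exists (mkposreal _ Hp). intros y Hy. apply ball_R in Hy. simpl in Hy.
    symmetry. apply gG_Derive. apply Rabs_def2 in Hy. change R in y. unfold minus, plus, opp in Hy; simpl in Hy. lra.
  - apply continuity_pt_filterlim. apply continuity_pt_minus.
    + apply continuity_pt_filterlim. now apply fG_cont.
    + apply continuity_pt_mult. apply continuity_pt_const. intros a b; reflexivity.
      apply continuity_pt_filterlim. now apply fG_cont.
Qed.

Lemma gG_lim0 s : 1 <= s -> filterlim (gG s) (at_right 0) (locally 0).
Proof.
  intros Hs. apply filterlim_locally. intros eps.
  assert (Hp : 0 < Rmin 1 eps) by (apply Rmin_glb_lt; [lra|apply cond_pos]).
  exists (mkposreal _ Hp). intros t Ht Htp. apply ball_R in Ht. change (Rabs (t - 0) < Rmin 1 eps) in Ht. change R in t.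
  apply ball_R. unfold gG.
  rewrite Rminus_0_r in *. rewrite Rabs_pos_eq in Ht by lra.
  assert (t < 1) by (apply Rlt_le_trans with (1 := Ht); apply Rmin_l).
  assert (t < eps) by (apply Rlt_le_trans with (1 := Ht); apply Rmin_r).
  assert (ln t <= 0) by (rewrite <- ln_1; apply ln_le'; lra).
  assert (HH1 : Rpower t s <= t).
  { unfold Rpower. rewrite <- (exp_ln t) at 2 by lra. apply exp_le'. nra. }
  assert (HH2 : exp (-t) <= 1).
  { apply Rle_trans with (exp 0); [apply exp_le'; lra | rewrite exp_0; lra]. }
  assert (0 < Rpower t s) by apply exp_pos.
  assert (0 < exp (-t)) by apply exp_pos.
  rewrite Rabs_Ropp, Rabs_pos_eq by nra. nra.
Qed.

Lemma gG_liminf s : 1 <= s -> filterlim (gG s) (Rbar_locally p_infty) (locally 0).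
Proof.
  intros Hs. destruct (nat_above (s + 1)) as [n Hn].
  set (C := INR (Factorial.fact n)).
  assert (HC : 0 < C) by (apply lt_0_INR, Factorial.lt_O_fact).
  apply filterlim_locally. intros eps.
  exists (Rmax 1 (C / eps)). intros t Ht.
  assert (t > 1) by (eapply Rle_lt_trans; [apply Rmax_l|exact Ht]).
  assert (t > C / eps) by (eapply Rle_lt_trans; [apply Rmax_r|exact Ht]).
  apply ball_R. unfold gG. rewrite Rminus_0_r.
  pose proof (Rpower_exp_bound (s+1) t n ltac:(lra) Hn) as HB.
  rewrite Rpower_plus, Rpower_1 in HB by lra.
  assert (0 < Rpower t s) by apply exp_pos.
  assert (0 < exp (-t)) by apply exp_pos.
  rewrite Rabs_Ropp, Rabs_pos_eq by nra.
  pose proof (cond_pos eps).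
  assert (C < eps * t).
  { apply Rmult_lt_reg_r with (/ eps). apply Rinv_0_lt_compat; lra.
    replace (eps * t * / eps) with t by (field; lra). exact H0. }
  fold C in HB. nra.
Qed.

Lemma gamma_rec_is s l : 1 <= s ->
  is_RInt_gen (fG s) (at_right 0) (Rbar_locally p_infty) l ->
  is_RInt_gen (fG (s+1)) (at_right 0) (Rbar_locally p_infty) (s * l).
Proof.
  intros Hs Hl.
  assert (Hpos : filter_prod (at_right 0) (Rbar_locally p_infty)
     (fun ab : R * R => 0 < fst ab /\ 0 < snd ab)).
  { apply Filter_prod with (Q := fun a => 0 < a) (R := fun b => 0 < b).
    - exists (mkposreal 1 Rlt_0_1). intros y _ Hy. exact Hy.
    - exists 0. intros; lra.
    - intros x y Hx Hy; simpl; split; lra. }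
  assert (HD : is_RInt_gen (Derive (gG s)) (at_right 0) (Rbar_locally p_infty) (0 - 0)).
  { apply is_RInt_gen_Derive.
    - eapply filter_imp; [|exact Hpos]. intros [a b] [Ha Hb] x Hx. simpl in *.
      exists (fG (s+1) x - s * fG s x). apply gG_derive.
      assert (0 < Rmin a b) by (apply Rmin_glb_lt; lra). lra.
    - eapply filter_imp; [|exact Hpos]. intros [a b] [Ha Hb] x Hx. simpl in *.
      apply gG_Derive_cont.
      assert (0 < Rmin a b) by (apply Rmin_glb_lt; lra). lra.
    - now apply gG_lim0.
    - now apply gG_liminf. }
  pose proof (is_RInt_gen_scal (V:=R_NormedModule) _ s _ Hl) as HS.
  pose proof (is_RInt_gen_plus (V:=R_NormedModule) _ _ _ _ HS HD) as HP.
  replace (s * l) with (plus (scal s l) (0 - 0)) by (unfold plus, scal; simpl; unfold mult; simpl; ring).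
  eapply is_RInt_gen_ext; [|exact HP].
  eapply filter_imp; [|exact Hpos]. intros [a b] [Ha Hb] x Hx. simpl in *.
  assert (0 < Rmin a b) by (apply Rmin_glb_lt; lra).
  rewrite gG_Derive by lra. unfold plus, scal; simpl; unfold mult; simpl. ring.
Qed.

Lemma PF_right : ProperFilter' (at_right 0).
Proof. apply Proper_StrongProper, at_right_proper_filter. Qed.
Lemma PF_inf : ProperFilter' (Rbar_locally p_infty).
Proof. apply Proper_StrongProper, Rbar_locally_filter. Qed.

Lemma Gamma_is s : 1 <= s ->
  0 < Gamma s /\ is_RInt_gen (fG s) (at_right 0) (Rbar_locally p_infty) (Gamma s).
Proof.
  intros Hs. destruct (gamma_is s Hs) as [l [Hl HI]].
  assert (E : Gamma s = l).
  { unfold Gamma. exact (is_RInt_gen_unique (V:=R_CompleteNormedModule) (FFa:=PF_right) (FFb:=PF_inf) (fG s) l HI). }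
  rewrite E. split; easy.
Qed.

Lemma Gamma_pos s : 1 <= s -> 0 < Gamma s.
Proof. intros; now apply Gamma_is. Qed.

Lemma Gamma_rec s : 1 <= s -> Gamma (s + 1) = s * Gamma s.
Proof.
  intros Hs. destruct (Gamma_is s Hs) as [_ HI].
  pose proof (gamma_rec_is s _ Hs HI) as H.
  unfold Gamma at 1.
  exact (is_RInt_gen_unique (V:=R_CompleteNormedModule) (FFa:=PF_right) (FFb:=PF_inf) (fG (s+1)) _ H).
Qed.


Definition cc (mu : R) (k : nat) : R :=
  / (INR (Factorial.fact k) * Gamma (INR k + mu + 1)).

Lemma fact_pos k : 0 < INR (Factorial.fact k).
Proof. apply lt_0_INR, Factorial.lt_O_fact. Qed.

Lemma Gk_pos mu k : 0 <= mu -> 0 < Gamma (INR k + mu + 1).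
Proof. intros. apply Gamma_pos. pose proof (pos_INR k). lra. Qed.

Lemma cc_pos mu k : 0 <= mu -> 0 < cc mu k.
Proof.
  intros. unfold cc. apply Rinv_0_lt_compat, Rmult_lt_0_compat.
  apply fact_pos. now apply Gk_pos.
Qed.

Lemma Gk_rec mu k : 0 <= mu ->
  Gamma (INR k + mu + 1 + 1) = (INR k + mu + 1) * Gamma (INR k + mu + 1).
Proof. intros. apply Gamma_rec. pose proof (pos_INR k). lra. Qed.

Lemma cc_S mu k : 0 <= mu ->
  cc mu (S k) = cc mu k / (INR (S k) * (INR k + mu + 1)).
Proof.
  intros Hmu. unfold cc.
  replace (INR (S k) + mu + 1) with (INR k + mu + 1 + 1) by (rewrite S_INR; ring).
  rewrite Gk_rec by easy.
  change (Factorial.fact (S k)) with (S k * Factorial.fact k)%nat.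
  rewrite mult_INR.
  pose proof (fact_pos k). pose proof (Gk_pos mu k Hmu). pose proof (pos_INR k).
  rewrite S_INR. field. repeat split; lra.
Qed.

Lemma cc_up mu k : 0 <= mu -> cc mu k = (INR k + mu + 1) * cc (mu + 1) k.
Proof.
  intros Hmu. unfold cc.
  replace (INR k + (mu + 1) + 1) with (INR k + mu + 1 + 1) by ring.
  rewrite Gk_rec by easy.
  pose proof (fact_pos k). pose proof (Gk_pos mu k Hmu). pose proof (pos_INR k).
  field. repeat split; lra.
Qed.

Lemma cc_derive mu k : 0 <= mu -> PS_derive (cc mu) k = cc (mu + 1) k.
Proof.
  intros Hmu. unfold PS_derive. rewrite cc_S, cc_up by easy.
  pose proof (cc_pos (mu+1) k ltac:(lra)). pose proof (pos_INR k).
  rewrite S_INR. field. lra.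
Qed.

Lemma cc_radius mu : 0 <= mu -> CV_radius (cc mu) = p_infty.
Proof.
  intros Hmu. apply CV_radius_infinite_DAlembert.
  - intros n. pose proof (cc_pos mu n Hmu). lra.
  - apply is_lim_seq_le_le with (u := fun _ => 0) (w := fun n => / INR (S n)).
    + intros n. rewrite cc_S by easy.
      pose proof (cc_pos mu n Hmu). pose proof (pos_INR n). rewrite S_INR.
      replace (cc mu n / ((INR n + 1) * (INR n + mu + 1)) / cc mu n)
        with (/ ((INR n + 1) * (INR n + mu + 1))) by (field; repeat split; lra).
      rewrite Rabs_pos_eq.
      2:{ left; apply Rinv_0_lt_compat. nra. }
      split. left; apply Rinv_0_lt_compat; nra.
      apply Rinv_le_contravar; nra.
    + apply is_lim_seq_const.
    + apply (is_lim_seq_incr_1 (fun n => / INR n) 0).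
      replace (Finite 0) with (Rbar_inv p_infty) by reflexivity.
      apply is_lim_seq_inv. apply is_lim_seq_INR. easy.
Qed.

Definition FF (mu z : R) : R := PSeries (cc mu) z.

Lemma FF_ex mu z : 0 <= mu -> ex_pseries (cc mu) z.
Proof. intros. apply CV_radius_inside. rewrite cc_radius by easy. easy. Qed.

Lemma FF_derive mu z : 0 <= mu -> is_derive (FF mu) z (FF (mu + 1) z).
Proof.
  intros Hmu. unfold FF.
  replace (PSeries (cc (mu + 1)) z) with (PSeries (PS_derive (cc mu)) z).
  - apply is_derive_PSeries. rewrite cc_radius by easy. easy.
  - unfold PSeries. apply Series_ext. intros n. now rewrite cc_derive.
Qed.

Lemma FF_pos mu z : 0 <= mu -> 0 <= z -> 0 < FF mu z.
Proof.
  intros Hmu Hz. unfold FF. rewrite PSeries_decr_1 by (now apply FF_ex).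
  pose proof (cc_pos mu 0 Hmu).
  assert (0 <= PSeries (PS_decr_1 (cc mu)) z).
  { unfold PSeries.
    rewrite <- (Rmult_0_l (Series (fun k => PS_decr_1 (cc mu) k * z ^ k))).
    rewrite <- Series_scal_l.
    apply Series_le.
    - intros n. unfold PS_decr_1. pose proof (cc_pos mu (S n) Hmu).
      pose proof (pow_le z n Hz). split; nra.
    - assert (HE : ex_pseries (PS_decr_1 (cc mu)) z).
      { apply CV_radius_inside. rewrite CV_radius_decr_1, cc_radius by easy. easy. }
      eapply ex_series_ext; [|exact HE].
      intros n. simpl. unfold scal; simpl; unfold mult; simpl. rewrite pow_n_pow. ring. }
  nra.
Qed.

Lemma FF_rec mu z : 0 <= mu ->
  FF mu z = (mu + 1) * FF (mu + 1) z + z * FF (mu + 1 + 1) z.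
Proof.
  intros Hmu.
  set (c1 := cc (mu + 1)).
  assert (H1 : ex_pseries (PS_scal (mu + 1) c1) z).
  { apply ex_pseries_scal. unfold mult; simpl; ring. apply FF_ex; lra. }
  assert (H2 : ex_pseries (PS_incr_1 (PS_derive c1)) z).
  { apply ex_pseries_incr_1. apply ex_pseries_derive. unfold c1.
    rewrite cc_radius by lra. easy. }
  assert (E : FF mu z = PSeries (PS_plus (PS_scal (mu + 1) c1) (PS_incr_1 (PS_derive c1))) z).
  { unfold FF, PSeries. apply Series_ext. intros n.
    unfold PS_plus, PS_scal, PS_incr_1, plus, scal; simpl; unfold mult; simpl.
    rewrite cc_up by easy. fold c1.
    destruct n as [|n].
    - simpl. unfold zero; simpl. ring.
    - unfold PS_derive. rewrite S_INR. ring. }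
  rewrite E, PSeries_plus by easy.
  rewrite PSeries_incr_1.
  rewrite PSeries_scal.
  unfold FF. f_equal. f_equal.
  unfold PSeries. apply Series_ext. intros n. unfold c1. rewrite cc_derive by lra. easy.
Qed.


Lemma besselI_eq mu x : 0 < x -> besselI mu x = Rpower (x/2) mu * FF mu ((x/2)^2).
Proof.
  intros Hx. unfold besselI, FF, PSeries. rewrite <- Series_scal_l.
  apply Series_ext. intros k. unfold cc.
  rewrite Rpower_plus.
  replace (2 * INR k) with (INR (2 * k)) by (rewrite mult_INR; simpl; ring).
  rewrite Rpower_pow by lra. rewrite <- pow_mult.
  pose proof (fact_pos k).
  unfold Rdiv. ring.
Qed.

Lemma Psi_eq nu x : 0 <= nu -> 0 < x ->
  Psi nu x = (x/2) * FF (nu+1) ((x/2)^2) / FF nu ((x/2)^2).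
Proof.
  intros Hnu Hx. unfold Psi. rewrite !besselI_eq by lra.
  rewrite Rpower_plus, Rpower_1 by lra.
  assert (0 < Rpower (x/2) nu) by apply exp_pos.
  assert (0 < FF nu ((x/2)^2)) by (apply FF_pos; [lra| apply pow2_ge_0]).
  field. split; lra.
Qed.


Lemma FFcomp_derive mu x : 0 <= mu ->
  is_derive (fun y => FF mu ((y/2)^2)) x (FF (mu+1) ((x/2)^2) * (x/2)).
Proof.
  intros Hmu.
  pose proof (is_derive_comp (FF mu) (fun y => (y/2)^2) x _ (x/2)
     (FF_derive mu ((x/2)^2) Hmu)) as H.
  assert (Hg : is_derive (fun y : R => (y/2)^2) x (x/2)).
  { auto_derive; [easy|]. field. }
  specialize (H Hg). unfold scal in H; simpl in H; unfold mult in H; simpl in H.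
  rewrite Rmult_comm. exact H.
Qed.

Lemma is_derive_val (f : R -> R) (x l1 l2 : R) : is_derive f x l1 -> l1 = l2 -> is_derive f x l2.
Proof. intros H ->; exact H. Qed.


Definition UU (nu x : R) := FF nu ((x/2)^2).
Definition VV (nu x : R) := FF (nu+1) ((x/2)^2).
Definition PP (nu x : R) := (x/2) * VV nu x / UU nu x.

Lemma UU_pos nu (Hnu : 0 <= nu) x : 0 < UU nu x.
Proof. apply FF_pos; [lra | apply pow2_ge_0]. Qed.
Lemma VV_pos nu (Hnu : 0 <= nu) x : 0 < VV nu x.
Proof. apply FF_pos; [lra | apply pow2_ge_0]. Qed.

Lemma PP_pos nu (Hnu : 0 <= nu) x : 0 < x -> 0 < PP nu x.
Proof.
  intros. unfold PP. pose proof (UU_pos nu Hnu x). pose proof (VV_pos nu Hnu x).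
  apply Rdiv_lt_0_compat; nra.
Qed.

Lemma PP_derive nu (Hnu : 0 <= nu) x : 0 < x ->
  is_derive (PP nu) x (1 - (2*nu+1) * PP nu x / x - PP nu x ^ 2).
Proof.
  intros Hx.
  assert (HU := FFcomp_derive nu x Hnu).
  assert (HV := FFcomp_derive (nu+1) x ltac:(lra)).
  assert (Hn : is_derive (fun y => (y/2) * VV nu y) x
     (1/2 * VV nu x + (x/2) * (FF (nu+1+1) ((x/2)^2) * (x/2)))).
  { eapply is_derive_ext.
    2:{ apply (is_derive_mult (fun y => y/2) (VV nu)). auto_derive; easy. exact HV.
        intros; apply Rmult_comm. }
    intros; reflexivity. }
  pose proof (is_derive_div _ _ x _ _ Hn HU (Rgt_not_eq _ _ (UU_pos nu Hnu x))) as HD.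
  assert (Hrec := FF_rec nu ((x/2)^2) Hnu).
  fold (UU nu x) in Hrec. fold (VV nu x) in Hrec.
  set (F2 := FF (nu + 1 + 1) ((x/2)^2)) in *.
  fold (UU nu x) (VV nu x) in HD.
  assert (HF2 : F2 = (UU nu x - (nu+1) * VV nu x) / ((x/2)^2)).
  { rewrite Hrec. field. lra. }
  eapply is_derive_val.
  - eapply is_derive_ext; [|exact HD]. intros; reflexivity.
  - cbv beta. fold (UU nu x). rewrite HF2. unfold PP.
    pose proof (UU_pos nu Hnu x). field. split; lra.
Qed.


Lemma barrier_up (f df : R -> R) (X L eta : R) : 0 < eta ->
  (forall x, X < x -> is_derive f x (df x)) ->
  (forall x, X < x -> L < f x -> df x <= - eta) ->
  exists Y, forall x, Y < x -> f x <= L.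
Proof.
  intros Heta Hd Hneg.
  assert (Hmvt : forall a b, X < a -> a < b -> exists c, f b - f a = df c * (b - a) /\ a < c < b).
  { intros a b Ha Hab. apply MVT_cor2; [exact Hab|].
    intros c Hc. apply is_derive_Reals. apply Hd. lra. }
  assert (Hcont : forall x, X < x -> continuous f x).
  { intros x Hx. apply (ex_derive_continuous (K:=R_AbsRing) (V:=R_NormedModule)).
    eexists; apply Hd; exact Hx. }
  assert (Hreach : exists x1, X < x1 /\ f x1 <= L).
  { apply NNPP. intros Hn.
    assert (Hall : forall x, X < x -> L < f x).
    { intros x Hx. apply Rnot_le_lt. intros Hle. apply Hn. exists x. split; easy. }
    set (x0 := X + 1).
    set (x := x0 + (f x0 - L) / eta + 1).
    assert (Hf0 : L < f x0) by (apply Hall; unfold x0; lra).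
    assert (Hq : 0 < (f x0 - L) / eta) by (apply Rdiv_lt_0_compat; lra).
    destruct (Hmvt x0 x) as [c [Hc1 Hc2]]; [unfold x0; lra | unfold x; lra |].
    assert (df c <= - eta) by (apply Hneg; [unfold x0 in *; lra | apply Hall; unfold x0 in *; lra]).
    assert (Hfx : L < f x) by (apply Hall; unfold x, x0 in *; lra).
    assert (Hxx : x - x0 = (f x0 - L) / eta + 1) by (unfold x; ring).
    assert (eta * ((f x0 - L) / eta) = f x0 - L) by (field; lra).
    assert (f x - f x0 <= - eta * (x - x0)) by (rewrite Hc1; apply Rmult_le_compat_r; lra).
    rewrite Hxx in H1. nra. }
  destruct Hreach as [x1 [Hx1 Hfx1]].
  exists x1. intros x Hx. apply Rnot_lt_le. intros Hfx.
  destruct (continuity_ab_maj f x1 x) as [m [Hm1 Hm2]]; [lra| |].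
  { intros c Hc. apply continuity_pt_filterlim. apply Hcont. lra. }
  assert (Hfm : f x <= f m) by (apply Hm1; lra).
  assert (Hm : x1 < m).
  { destruct Hm2 as [[H|H] _]; [easy|]. subst m. lra. }
  pose proof (Hcont m ltac:(lra)) as Hc.
  assert (Hep : 0 < f m - L) by lra.
  apply (proj1 (filterlim_locally _ _)) with (eps := mkposreal _ Hep) in Hc.
  destruct Hc as [alpha Halpha].
  set (t := Rmax ((x1 + m) / 2) (m - alpha / 2)).
  assert (Ht1 : (x1 + m) / 2 <= t) by apply Rmax_l.
  assert (Ht2 : m - alpha / 2 <= t) by apply Rmax_r.
  assert (Ht3 : t < m).
  { unfold t. pose proof (cond_pos alpha). apply Rmax_lub_lt; lra. }
  destruct (Hmvt t m) as [c [Hc1 Hc2]]; [lra | lra |].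
  assert (Hfc : L < f c).
  { assert (Hb : ball m alpha c).
    { apply ball_R. pose proof (cond_pos alpha). rewrite Rabs_left1 by lra. lra. }
    specialize (Halpha c Hb). apply ball_R in Halpha.
    change (Rabs (f c - f m) < f m - L) in Halpha.
    apply Rabs_def2 in Halpha. lra. }
  assert (df c <= - eta) by (apply Hneg; lra).
  assert (f t <= f m) by (apply Hm1; lra).
  assert (df c * (m - t) < 0) by (apply Rmult_neg_pos; lra).
  lra.
Qed.

Lemma barrier_two (f df : R -> R) (X L d eta : R) : 0 < eta ->
  (forall x, X < x -> is_derive f x (df x)) ->
  (forall x, X < x -> L + d < f x -> df x <= - eta) ->
  (forall x, X < x -> f x < L - d -> eta <= df x) ->
  exists Y, forall x, Y < x -> Rabs (f x - L) <= d.
Proof.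
  intros He Hd H1 H2.
  destruct (barrier_up f df X (L + d) eta He Hd H1) as [Y1 HY1].
  destruct (barrier_up (fun x => - f x) (fun x => - df x) X (- (L - d)) eta He) as [Y2 HY2].
  - intros x Hx. apply (is_derive_opp f x (df x)). now apply Hd.
  - intros x Hx Hf. assert (eta <= df x) by (apply H2; lra). lra.
  - exists (Rmax Y1 Y2). intros x Hx.
    assert (Y1 < x) by (eapply Rle_lt_trans; [apply Rmax_l|exact Hx]).
    assert (Y2 < x) by (eapply Rle_lt_trans; [apply Rmax_r|exact Hx]).
    specialize (HY1 x H). specialize (HY2 x H0). simpl in HY2.
    apply Rabs_le. split; lra.
Qed.

Lemma lim_of_bounds (f : R -> R) (L : R) :
  (forall d, 0 < d -> exists Y, forall x, Y < x -> Rabs (f x - L) <= d) ->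
  is_lim f p_infty L.
Proof.
  intros H. apply is_lim_spec. intros eps.
  destruct (H (eps / 2)) as [Y HY]. destruct eps; simpl; lra.
  exists Y. intros x Hx. specialize (HY x Hx). destruct eps; simpl in *; lra.
Qed.


Definition WW nu x := x - x * PP nu x.
Definition DW nu x := (2*nu+1) - 2 * WW nu x + WW nu x * (1 - (2*nu+1) + WW nu x) / x.

Lemma WW_derive nu x : 0 <= nu -> 0 < x -> is_derive (WW nu) x (DW nu x).
Proof.
  intros Hnu Hx. unfold WW.
  pose proof (PP_derive nu Hnu x Hx) as HP.
  assert (H : is_derive (fun y => y - y * PP nu y) x (1 - (1 * PP nu x + x * (1 - (2*nu+1) * PP nu x / x - PP nu x ^ 2)))).
  { apply (is_derive_minus (fun y => y) (fun y => y * PP nu y)).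
    auto_derive; easy.
    apply (is_derive_mult (fun y => y) (PP nu)). auto_derive; easy. exact HP.
    intros; apply Rmult_comm. }
  eapply is_derive_val; [exact H|].
  unfold DW, WW. field. lra.
Qed.

Lemma WW_lim nu : 0 <= nu -> is_lim (WW nu) p_infty ((2*nu+1)/2).
Proof.
  intros Hnu. set (a := 2*nu+1). assert (Ha : 1 <= a) by (unfold a; lra).
  apply lim_of_bounds. intros d Hd.
  set (X := (a+1)^2 / d + 1).
  assert (HX1 : 1 <= X).
  { unfold X. assert (0 <= (a+1)^2/d) by (apply Rdiv_le_0_compat; nra). lra. }
  assert (HXd : forall x, X < x -> (a+1)^2 < d * x).
  { intros x Hx. unfold X in Hx.
    assert ((a+1)^2/d < x) by lra.
    apply Rmult_lt_reg_r with (/d). apply Rinv_0_lt_compat; lra.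
    replace (d * x * / d) with x by (field; lra). exact H. }
  apply (barrier_two (WW nu) (DW nu) X (a/2) d (Rmin d 1)).
  - apply Rmin_glb_lt; lra.
  - intros x Hx. apply WW_derive; lra.
  - intros x Hx Hw.
    assert (Hx0 : 0 < x) by lra.
    pose proof (PP_pos nu Hnu x Hx0) as HPp.
    set (w := WW nu x) in *.
    assert (Hwx : w < x) by (unfold w, WW; nra).
    assert (Hm1 : Rmin d 1 <= d) by apply Rmin_l.
    assert (Hm2 : Rmin d 1 <= 1) by apply Rmin_r.
    unfold DW. fold a. fold w.
    assert (Hwpos : 0 < w) by lra.
    assert (HA : w * (1 - a + w) / x = w * (1 - a) / x + w * w / x) by (field; lra).
    assert (HB : w * (1 - a) / x <= 0).
    { apply Rmult_le_reg_r with x; [lra|]. unfold Rdiv. rewrite Rmult_assoc, Rinv_l, Rmult_1_r by lra. nra. }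
    rewrite HA.
    destruct (Rle_lt_dec w (a+1)) as [Hw1|Hw1].
    + assert (w * w / x <= d).
      { apply Rmult_le_reg_r with x; [lra|]. unfold Rdiv. rewrite Rmult_assoc, Rinv_l, Rmult_1_r by lra.
        specialize (HXd x Hx). nra. }
      lra.
    + assert (w * w / x <= w).
      { apply Rmult_le_reg_r with x; [lra|]. unfold Rdiv. rewrite Rmult_assoc, Rinv_l, Rmult_1_r by lra. nra. }
      lra.
  - intros x Hx Hw.
    assert (Hx0 : 0 < x) by lra.
    set (w := WW nu x) in *.
    assert (Hm1 : Rmin d 1 <= d) by apply Rmin_l.
    assert (Hm2 : Rmin d 1 <= 1) by apply Rmin_r.
    unfold DW. fold a. fold w.
    destruct (Rlt_le_dec w 0) as [Hw0|Hw0].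
    + assert (0 <= w * (1 - a + w) / x).
      { apply Rdiv_le_0_compat; [|lra]. nra. }
      lra.
    + assert (- d <= w * (1 - a + w) / x).
      { apply Rmult_le_reg_r with x; [lra|]. unfold Rdiv. rewrite Rmult_assoc, Rinv_l, Rmult_1_r by lra.
        specialize (HXd x Hx).
        assert (w * (1 - a + w) >= w * (1 - a)) by nra.
        assert (w * (1 - a) >= a / 2 * (1 - a)) by nra.
        nra. }
      lra.
Qed.


Lemma lim_div_x (u : R -> R) (U : R) : is_lim u p_infty U ->
  is_lim (fun x => u x / x) p_infty 0.
Proof.
  intros Hu.
  pose proof (is_lim_div u (fun y => y) p_infty U p_infty Hu (is_lim_id _)) as H.
  simpl in H. replace (Finite 0) with (Finite (U * 0)) by (f_equal; ring).
  apply H; easy.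
Qed.

Lemma ln_upper h : -1 < h -> ln (1 + h) <= h.
Proof.
  intros Hh. rewrite <- (ln_exp h) at 2. apply ln_le'. lra. apply exp_ineq1_le.
Qed.

Lemma ln_lower h : -1 < h -> h / (1 + h) <= ln (1 + h).
Proof.
  intros Hh. pose proof (ln_upper (- h / (1 + h))) as H.
  assert (E : 1 + - h / (1 + h) = / (1 + h)) by (field; lra).
  assert (-1 < - h / (1 + h)).
  { replace (- h / (1 + h)) with (/ (1 + h) - 1) by (field; lra).
    assert (0 < / (1+h)) by (apply Rinv_0_lt_compat; lra). lra. }
  specialize (H H0). rewrite E, ln_Rinv in H by lra.
  replace (h / (1 + h)) with (- (- h / (1 + h))) by (field; lra). lra.
Qed.

Lemma lim_xln (u : R -> R) (U : R) : is_lim u p_infty U ->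
  is_lim (fun x => x * ln (1 - u x / x)) p_infty (- U).
Proof.
  intros Hu.
  assert (Hd := lim_div_x u U Hu).
  apply is_lim_le_le_loc with (f := fun x => - u x / (1 - u x / x)) (g := fun x => - u x).
  - pose proof (proj2 (is_lim_spec u p_infty U) Hu (mkposreal 1 Rlt_0_1)) as [M HM].
    exists (Rmax M (2 * (Rabs U + 1) + 1)). intros x Hx.
    assert (HxM : M < x) by (eapply Rle_lt_trans; [apply Rmax_l|exact Hx]).
    assert (Hx2 : 2 * (Rabs U + 1) + 1 < x) by (eapply Rle_lt_trans; [apply Rmax_r|exact Hx]).
    specialize (HM x HxM). simpl in HM.
    assert (HU : Rabs (u x) <= Rabs U + 1).
    { replace (u x) with ((u x - U) + U) by ring.
      eapply Rle_trans; [apply Rabs_triang|]. lra. }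
    pose proof (Rabs_pos U).
    assert (Hx0 : 0 < x) by lra.
    assert (Hh : Rabs (u x / x) < 1/2).
    { unfold Rdiv. rewrite Rabs_mult, Rabs_inv, (Rabs_pos_eq x) by lra.
      apply Rmult_lt_reg_r with x; [lra|].
      rewrite Rmult_assoc, Rinv_l, Rmult_1_r by lra. lra. }
    apply Rabs_def2 in Hh.
    set (h := - (u x / x)).
    replace (1 - u x / x) with (1 + h) by (unfold h; ring).
    assert (Hh1 : -1 < h) by (unfold h; lra).
    split.
    + pose proof (ln_lower h Hh1).
      replace (- u x / (1 + h)) with (x * (h / (1 + h))).
      2:{ assert (Hxne : x <> 0) by (apply Rgt_not_eq; lra).
          assert (Hhne : 1 + h <> 0) by (apply Rgt_not_eq; lra).
          unfold Rdiv. rewrite <- Rmult_assoc. f_equal. unfold h. field. exact Hxne. }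
      apply Rmult_le_compat_l; lra.
    + pose proof (ln_upper h Hh1).
      replace (- u x) with (x * h) by (unfold h; field; apply Rgt_not_eq; lra).
      apply Rmult_le_compat_l; lra.
  - replace (Finite (- U)) with (Rbar_div (- U) (1 - 0)) by (simpl; f_equal; field).
    apply is_lim_div.
    + apply (is_lim_opp u p_infty U Hu).
    + eapply is_lim_minus; [apply is_lim_const | exact Hd |]. reflexivity.
    + simpl. intro H; injection H; lra.
    + easy.
  - apply (is_lim_opp u p_infty U Hu).
Qed.


Lemma div_cancel (x A B : R) : x <> 0 -> (x * A) / (x * B) = A / B.
Proof.
  intros Hx. destruct (Req_dec B 0) as [HB|HB].
  - rewrite HB, Rmult_0_r. unfold Rdiv. rewrite Rinv_0. ring.
  - field. split; easy.
Qed.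

Theorem mainTheorem7 (nu : R) (hnu : 0 <= nu) :
  is_lim (fun x => xi nu x) p_infty (4 * (nu + 1) / (2 * nu + 1)).
Proof.
  pose proof (WW_lim nu hnu) as HW.
  assert (HPP : is_lim (PP nu) p_infty 1).
  { apply is_lim_ext_loc with (fun x => 1 - WW nu x / x).
    - exists 0. intros x Hx. unfold WW. field. apply Rgt_not_eq; lra.
    - eapply is_lim_minus; [apply is_lim_const | exact (lim_div_x _ _ HW) |].
      simpl. unfold is_Rbar_minus, is_Rbar_plus; simpl. f_equal. f_equal. ring. }
  assert (Hu1 : is_lim (fun x => 2 * (nu + 1) * PP nu x) p_infty (2 * (nu + 1))).
  { replace (Finite (2 * (nu + 1))) with (Rbar_mult (2 * (nu + 1)) 1) by (simpl; f_equal; ring).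
    apply is_lim_scal_l. exact HPP. }
  pose proof (lim_xln _ _ Hu1) as HN.
  pose proof (lim_xln _ _ HW) as HD.
  pose proof (is_lim_div _ _ p_infty _ _ HN HD) as H.
  replace (Finite (4 * (nu + 1) / (2 * nu + 1)))
    with (Rbar_div (Finite (- (2 * (nu + 1)))) (Finite (- ((2 * nu + 1) / 2)))).
  2:{ simpl. f_equal. field. lra. }
  eapply is_lim_ext_loc; [|apply H].
  - exists 0. intros x Hx.
    rewrite div_cancel by (apply Rgt_not_eq; lra).
    unfold xi. rewrite Psi_eq by lra.
    change (x / 2 * FF (nu+1) ((x/2)^2) / FF nu ((x/2)^2)) with (PP nu x).
    assert (Hxne : x <> 0) by (apply Rgt_not_eq; lra).
    f_equal.
    + f_equal. field. exact Hxne.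
    + f_equal. unfold WW. field. exact Hxne.
  - simpl. intro E; injection E; lra.
  - easy.
Qed.
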